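(* Let $\Pi=(\iota,\tau,\beta)$ be a safety problem over a vocabulary $\Sigma$, let $w$ be a fresh constant symbol, and let $\varphi(x)$ be a formula over $\Sigma$ with free variable $x$. Then $\varphi(w)$ is a sound prophecy for $\Pi$ if and only if the following safety problem over the vocabulary $\Sigma\cup\{m\}$, where $m$ is a fresh unary relation symbol, is safe: \[\Pi^{\mathrm{sound}}_{\varphi}=\Big(\iota\wedge\forall x.\,\varphi(x)\to m(x),\ \ \tau\wedge\forall x.\,(m(x)\wedge\varphi(x)\wedge\varphi'(x))\to m'(x),\ \ \beta\wedge\forall x.\,\varphi(x)\to\neg m(x)\Big).\]
   Context: A first-order vocabulary $\Sigma$ consists of constant, function and relation symbols; $\Sigma'=\{a' : a\in\Sigma\}$ is a disjoint copy, and for a formula $\varphi$, $\varphi'$ denotes $\varphi$ with every vocabulary symbol replaced by its primed copy. A state is a first-order structure over the vocabulary. A safety problem is a triple $(\iota,\tau,\beta)$, where $\iota$ (initial states) and $\beta$ (bad states) are closed formulas over $\Sigma$ and $\tau$ (transitions) is a closed formula over $\Sigma\uplus\Sigma'$. A pair of states $(s,t)$ over a common domain is a transition if the structure interpreting the unprimed symbols as in $s$ and the primed ones as in $t$ satisfies $\tau$. A trace is a finite sequence of states over a common domain whose consecutive states form transitions; a trace from $\iota$ to $\beta$ is a trace $s_0,\dots,s_k$ with $s_0\models\iota$ and $s_k\models\beta$. The problem is safe if there is no trace from $\iota$ to $\beta$. $\varphi(w)$ denotes $\varphi$ with $x$ replaced by $w$. The safety problem $\Pi^w_\varphi$ over $\Sigma\cup\{w\}$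 is \[\Pi^w_\varphi=\big(\iota\wedge\varphi(w),\ \varphi(w)\wedge\tau\wedge w'=w\wedge(\varphi(w))',\ \beta\wedge\varphi(w)\big).\] $\varphi(w)$ is a sound prophecy for $\Pi$ if for every trace of $\Pi$ from $\iota$ to $\beta$ there exists an interpretation of $w$ such that the resulting sequence of states is a trace of $\Pi^w_\varphi$ from $\iota\wedge\varphi(w)$ to $\beta\wedge\varphi(w)$. *)

(* Defs.v *)
From Stdlib Require Import Arith Fin.

Set Implicit Arguments.

(* Constants are 0-ary function symbols. *)
Record vocab : Type := Vocab {
  fsym : Type; farity : fsym -> nat;
  rsym : Type; rarity : rsym -> nat }.

(* Sigma (+) Sigma' : inl = unprimed symbol a, inr = primed copy a'. *)
Definition vpair (V : vocab) : vocab :=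
  Vocab (fun f : fsym V + fsym V => match f with inl g => farity V g | inr g => farity V g end)
        (fun r : rsym V + rsym V => match r with inl g => rarity V g | inr g => rarity V g end).

(* Sigma u {w}, w a fresh constant symbol (= None). *)
Definition vaddconst (V : vocab) : vocab :=
  Vocab (fun f : option (fsym V) => match f with Some g => farity V g | None => 0 end)
        (rarity V).

(* Sigma u {m}, m a fresh unary relation symbol (= None). *)
Definition vaddrel1 (V : vocab) : vocab :=
  Vocab (farity V)
        (fun r : option (rsym V) => match r with Some g => rarity V g | None => 1 end).

Inductive term (V : vocab) : Type :=
| tvar : nat -> term V
| tapp : forall f : fsym V, (Fin.t (farity V f) -> term V) -> term V.

Inductive formula (V : vocab) : Type :=
| fTrue : formula V
| fFalse : formula V
| fEq : term V -> term V -> formula V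
| fRel : forall r : rsym V, (Fin.t (rarity V r) -> term V) -> formula V
| fNot : formula V -> formula V
| fAnd : formula V -> formula V -> formula V
| fOr : formula V -> formula V -> formula V
| fImp : formula V -> formula V -> formula V
| fForall : nat -> formula V -> formula V
| fExists : nat -> formula V -> formula V.

Arguments tvar {V}.
Arguments fTrue {V}.
Arguments fFalse {V}.

Fixpoint tfree (V : vocab) (n : nat) (t : term V) : Prop :=
  match t with
  | tvar m => n = m
  | tapp f args => exists i, tfree n (args i)
  end.

Fixpoint free (V : vocab) (n : nat) (p : formula V) : Prop :=
  match p with
  | fTrue | fFalse => False
  | fEq a b => tfree n a \/ tfree n b
  | fRel r args => exists i, tfree n (args i)
  | fNot q => free n q
  | fAnd q1 q2 | fOr q1 q2 | fImp q1 q2 => free n q1 \/ free n q2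
  | fForall y q | fExists y q => n <> y /\ free n q
  end.

Definition closed (V : vocab) (p : formula V) : Prop := forall n, ~ free n p.

(* Substitution of a term for the free occurrences of variable x.
   (Only used with closed terms, so no capture can occur.) *)
Fixpoint tsubst (V : vocab) (x : nat) (s : term V) (t : term V) : term V :=
  match t with
  | tvar n => if Nat.eqb n x then s else tvar n
  | tapp f args => tapp f (fun i => tsubst x s (args i))
  end.

Fixpoint fsubst (V : vocab) (x : nat) (s : term V) (p : formula V) : formula V :=
  match p with
  | fTrue => fTrue
  | fFalse => fFalse
  | fEq a b => fEq (tsubst x s a) (tsubst x s b)
  | fRel r args => fRel r (fun i => tsubst x s (args i))
  | fNot q => fNot (fsubst x s q)
  | fAnd q1 q2 => fAnd (fsubst x s q1) (fsubst x s q2)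
  | fOr q1 q2 => fOr (fsubst x s q1) (fsubst x s q2)
  | fImp q1 q2 => fImp (fsubst x s q1) (fsubst x s q2)
  | fForall y q => if Nat.eqb y x then fForall y q else fForall y (fsubst x s q)
  | fExists y q => if Nat.eqb y x then fExists y q else fExists y (fsubst x s q)
  end.

Record vmorph (V W : vocab) : Type := VMorph {
  mf : fsym V -> fsym W;
  mf_ar : forall f, farity W (mf f) = farity V f;
  mr : rsym V -> rsym W;
  mr_ar : forall r, rarity W (mr r) = rarity V r }.

Fixpoint trename (V W : vocab) (h : vmorph V W) (t : term V) : term W :=
  match t with
  | tvar n => tvar n
  | tapp f args => tapp (mf h f) (fun i => trename h (args (Fin.cast i (mf_ar h f))))
  end.

Fixpoint frename (V W : vocab) (h : vmorph V W) (p : formula V) : formula W :=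
  match p with
  | fTrue => fTrue
  | fFalse => fFalse
  | fEq a b => fEq (trename h a) (trename h b)
  | fRel r args => fRel (mr h r) (fun i => trename h (args (Fin.cast i (mr_ar h r))))
  | fNot q => fNot (frename h q)
  | fAnd q1 q2 => fAnd (frename h q1) (frename h q2)
  | fOr q1 q2 => fOr (frename h q1) (frename h q2)
  | fImp q1 q2 => fImp (frename h q1) (frename h q2)
  | fForall y q => fForall y (frename h q)
  | fExists y q => fExists y (frename h q)
  end.

Definition incl_const (V : vocab) : vmorph V (vaddconst V) :=
  @VMorph V (vaddconst V) (@Some _) (fun _ => eq_refl) (fun r => r) (fun _ => eq_refl).
Definition incl_rel (V : vocab) : vmorph V (vaddrel1 V) :=
  @VMorph V (vaddrel1 V) (fun f => f) (fun _ => eq_refl) (@Some _) (fun _ => eq_refl).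
Definition unprimed (V : vocab) : vmorph V (vpair V) :=
  @VMorph V (vpair V) (@inl _ _) (fun _ => eq_refl) (@inl _ _) (fun _ => eq_refl).
Definition primed (V : vocab) : vmorph V (vpair V) :=
  @VMorph V (vpair V) (@inr _ _) (fun _ => eq_refl) (@inr _ _) (fun _ => eq_refl).
Definition pair_morph (V W : vocab) (h : vmorph V W) : vmorph (vpair V) (vpair W) :=
  @VMorph (vpair V) (vpair W)
    (fun f => match f with inl g => inl (mf h g) | inr g => inr (mf h g) end)
    (fun f => match f with inl g => mf_ar h g | inr g => mf_ar h g end)
    (fun r => match r with inl g => inl (mr h g) | inr g => inr (mr h g) end)
    (fun r => match r with inl g => mr_ar h g | inr g => mr_ar h g end).

Definition fprime (V : vocab) (p : formula V) : formula (vpair V) := frename (primed V) p.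
Definition funprimed (V : vocab) (p : formula V) : formula (vpair V) := frename (unprimed V) p.

Record structure (V : vocab) (D : Type) : Type := Structure {
  fint : forall f : fsym V, (Fin.t (farity V f) -> D) -> D;
  rint : forall r : rsym V, (Fin.t (rarity V r) -> D) -> Prop }.

Definition upd (D : Type) (env : nat -> D) (x : nat) (d : D) : nat -> D :=
  fun n => if Nat.eqb n x then d else env n.

Fixpoint teval (V : vocab) (D : Type) (M : structure V D) (env : nat -> D) (t : term V) : D :=
  match t with
  | tvar n => env n
  | tapp f args => fint M f (fun i => teval M env (args i))
  end.

Fixpoint sat (V : vocab) (D : Type) (M : structure V D) (env : nat -> D) (p : formula V) : Prop :=
  match p with
  | fTrue => True
  | fFalse => False
  | fEq a b => teval M env a = teval M env b
  | fRel r args => rint M r (fun i => teval M env (args i))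
  | fNot q => ~ sat M env q
  | fAnd q1 q2 => sat M env q1 /\ sat M env q2
  | fOr q1 q2 => sat M env q1 \/ sat M env q2
  | fImp q1 q2 => sat M env q1 -> sat M env q2
  | fForall y q => forall d : D, sat M (upd env y d) q
  | fExists y q => exists d : D, sat M (upd env y d) q
  end.

Definition holds (V : vocab) (D : Type) (M : structure V D) (p : formula V) : Prop :=
  forall env : nat -> D, sat M env p.

Definition combine (V : vocab) (D : Type) (s t : structure V D) : structure (vpair V) D :=
  @Structure (vpair V) D
    (fun f => match f as f0 return (Fin.t (farity (vpair V) f0) -> D) -> D with
              | inl g => fint s g | inr g => fint t g end)
    (fun r => match r as r0 return (Fin.t (rarity (vpair V) r0) -> D) -> Prop with
              | inl g => rint s g | inr g => rint t g end).

Record safety_problem (V : vocab) : Type := SafetyProblem {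
  sp_init : formula V;
  sp_trans : formula (vpair V);
  sp_bad : formula V }.

Definition well_formed_sp (V : vocab) (P : safety_problem V) : Prop :=
  closed (sp_init P) /\ closed (sp_trans P) /\ closed (sp_bad P).

Definition is_transition (V : vocab) (P : safety_problem V) (D : Type)
  (s t : structure V D) : Prop := holds (combine s t) (sp_trans P).

Definition trace_init_bad (V : vocab) (P : safety_problem V) (D : Type) (k : nat)
  (s : nat -> structure V D) : Prop :=
  inhabited D /\
  holds (s 0) (sp_init P) /\
  (forall i, i < k -> is_transition P (s i) (s (S i))) /\
  holds (s k) (sp_bad P).

Definition safe (V : vocab) (P : safety_problem V) : Prop :=
  forall (D : Type) (k : nat) (s : nat -> structure V D), ~ @trace_init_bad V P D k s.

Definition wterm (V : vocab) : term (vaddconst V) :=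
  @tapp (vaddconst V) None (fun i : Fin.t 0 => Fin.case0 (fun _ => term (vaddconst V)) i).

Definition phi_w (V : vocab) (x : nat) (phi : formula V) : formula (vaddconst V) :=
  fsubst x (wterm V) (frename (incl_const V) phi).

Definition Pi_w (V : vocab) (P : safety_problem V) (x : nat) (phi : formula V)
  : safety_problem (vaddconst V) :=
  SafetyProblem
    (fAnd (frename (incl_const V) (sp_init P)) (phi_w x phi))
    (fAnd (funprimed (phi_w x phi))
      (fAnd (frename (pair_morph (incl_const V)) (sp_trans P))
        (fAnd (fEq (trename (primed _) (wterm V)) (trename (unprimed _) (wterm V)))
              (fprime (phi_w x phi)))))
    (fAnd (frename (incl_const V) (sp_bad P)) (phi_w x phi)).

Definition expand_const (V : vocab) (D : Type) (M : structure V D) (d : D)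
  : structure (vaddconst V) D :=
  @Structure (vaddconst V) D
    (fun f => match f as f0 return (Fin.t (farity (vaddconst V) f0) -> D) -> D with
              | Some g => fint M g | None => fun _ => d end)
    (rint M).

Definition sound_prophecy (V : vocab) (P : safety_problem V) (x : nat) (phi : formula V)
  : Prop :=
  forall (D : Type) (k : nat) (s : nat -> structure V D),
    @trace_init_bad V P D k s ->
    exists d : D, @trace_init_bad _ (Pi_w P x phi) D k (fun i => expand_const (s i) d).

Definition m_atom (V : vocab) (x : nat) : formula (vaddrel1 V) :=
  @fRel (vaddrel1 V) None (fun _ => tvar x).

Definition Pi_sound (V : vocab) (P : safety_problem V) (x : nat) (phi : formula V)
  : safety_problem (vaddrel1 V) :=
  let phim := frename (incl_rel V) phi in
  SafetyProblem
    (fAnd (frename (incl_rel V) (sp_init P)) (fForall x (fImp phim (m_atom V x))))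
    (fAnd (frename (pair_morph (incl_rel V)) (sp_trans P))
      (fForall x (fImp (fAnd (funprimed (m_atom V x)) (fAnd (funprimed phim) (fprime phim)))
                       (fprime (m_atom V x)))))
    (fAnd (frename (incl_rel V) (sp_bad P)) (fForall x (fImp phim (fNot (m_atom V x))))).

(* Main.v *)
Require Import Defs.
From Stdlib Require Import Arith Fin FunctionalExtensionality Classical Lia.

Lemma cast_refl : forall n (i : Fin.t n) (e : n = n), Fin.cast i e = i.
Proof. induction i; intros e; simpl; [reflexivity| now rewrite IHi]. Qed.

Definition reduct (V W : vocab) (h : vmorph V W) (D : Type) (M : structure W D) : structure V D :=
  @Structure V D (fun f a => fint M (mf h f) (fun i => a (Fin.cast i (mf_ar h f))))
                 (fun r a => rint M (mr h r) (fun i => a (Fin.cast i (mr_ar h r)))).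
Arguments reduct {V W} h {D} M.

Lemma teval_rename (V W : vocab) (h : vmorph V W) (D : Type) (M : structure W D) env t :
  teval M env (trename h t) = teval (reduct h M) env t.
Proof.
  induction t as [n|f args IH]; simpl; [reflexivity|].
  f_equal. apply functional_extensionality; intro i. apply IH.
Qed.

Lemma sat_rename (V W : vocab) (h : vmorph V W) (D : Type) (M : structure W D) p :
  forall env, sat M env (frename h p) <-> sat (reduct h M) env p.
Proof.
  induction p; intro env; simpl; try tauto.
  - rewrite !teval_rename; tauto.
  - replace (fun i => teval M env (trename h (t (Fin.cast i (mr_ar h r)))))
      with (fun i => teval (reduct h M) env (t (Fin.cast i (mr_ar h r)))); [tauto|].
    apply functional_extensionality; intro i; now rewrite teval_rename.
  - rewrite IHp; tauto.
  - rewrite IHp1, IHp2; tauto.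
  - rewrite IHp1, IHp2; tauto.
  - rewrite IHp1, IHp2; tauto.
  - split; intros H d; apply IHp, H.
  - split; intros [d H]; exists d; apply IHp, H.
Qed.

Definition expand_rel (V : vocab) (D : Type) (M : structure V D) (m : D -> Prop)
  : structure (vaddrel1 V) D :=
  @Structure (vaddrel1 V) D (fint M)
    (fun r => match r as r0 return (Fin.t (rarity (vaddrel1 V) r0) -> D) -> Prop with
              | Some g => rint M g | None => fun a => m (a Fin.F1) end).
Arguments expand_rel {V D} M m.

Lemma reduct_incl_const V D (M : structure V D) d : reduct (incl_const V) (expand_const M d) = M.
Proof.
  destruct M as [F R]; unfold reduct; simpl; f_equal;
  apply functional_extensionality_dep; intro f; apply functional_extensionality; intro a;
  f_equal; apply functional_extensionality; intro i; now rewrite cast_refl.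
Qed.

Lemma reduct_incl_rel V D (M : structure V D) m : reduct (incl_rel V) (expand_rel M m) = M.
Proof.
  destruct M as [F R]; unfold reduct; simpl; f_equal;
  apply functional_extensionality_dep; intro f; apply functional_extensionality; intro a;
  f_equal; apply functional_extensionality; intro i; now rewrite cast_refl.
Qed.

Lemma reduct_unprimed V D (M N : structure V D) : reduct (unprimed V) (combine M N) = M.
Proof.
  destruct M as [F R]; unfold reduct; simpl; f_equal;
  apply functional_extensionality_dep; intro f; apply functional_extensionality; intro a;
  f_equal; apply functional_extensionality; intro i; now rewrite cast_refl.
Qed.

Lemma reduct_primed V D (M N : structure V D) : reduct (primed V) (combine M N) = N.
Proof.
  destruct N as [F R]; unfold reduct; simpl; f_equal;
  apply functional_extensionality_dep; intro f; apply functional_extensionality; intro a;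
  f_equal; apply functional_extensionality; intro i; now rewrite cast_refl.
Qed.

Lemma reduct_pair V W (h : vmorph V W) D (M N : structure W D) :
  reduct (pair_morph h) (combine M N) = combine (reduct h M) (reduct h N).
Proof.
  unfold reduct, combine; simpl; f_equal;
  apply functional_extensionality_dep; intros [f|f]; reflexivity.
Qed.

Lemma upd_same D (env : nat -> D) x a d : upd (upd env x a) x d = upd env x d.
Proof. apply functional_extensionality; intro n; unfold upd; destruct (Nat.eqb n x); auto. Qed.

Lemma upd_comm D (env : nat -> D) x y a d : x <> y -> upd (upd env x a) y d = upd (upd env y d) x a.
Proof.
  intro Hxy; apply functional_extensionality; intro n; unfold upd.
  destruct (Nat.eqb_spec n y), (Nat.eqb_spec n x); subst; auto; congruence.
Qed.

Lemma upd_eq D (env : nat -> D) x d : upd env x d x = d.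
Proof. unfold upd; now rewrite Nat.eqb_refl. Qed.

Section Subst.
Variables (V : vocab) (D : Type) (M : structure V D) (x : nat) (s : term V).
Hypothesis hs : forall env env', teval M env s = teval M env' s.

Lemma teval_subst t : forall env, teval M env (tsubst x s t) = teval M (upd env x (teval M env s)) t.
Proof.
  induction t as [n|f args IH]; intro env; simpl.
  - unfold upd; destruct (Nat.eqb n x); reflexivity.
  - f_equal; apply functional_extensionality; intro i; apply IH.
Qed.

Lemma sat_subst p : forall env, sat M env (fsubst x s p) <-> sat M (upd env x (teval M env s)) p.
Proof.
  induction p; intro env; simpl; try tauto.
  - rewrite !teval_subst; tauto.
  - replace (fun i => teval M env (tsubst x s (t i))) with
      (fun i => teval M (upd env x (teval M env s)) (t i)); [tauto|].
    apply functional_extensionality; intro i; now rewrite teval_subst.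
  - rewrite IHp; tauto.
  - rewrite IHp1, IHp2; tauto.
  - rewrite IHp1, IHp2; tauto.
  - rewrite IHp1, IHp2; tauto.
  - destruct (Nat.eqb_spec n x); simpl.
    + subst; split; intros H d; specialize (H d); [rewrite upd_same|rewrite upd_same in H]; apply H.
    + split; intros H d; specialize (H d).
      * rewrite IHp in H. rewrite (hs _ env) in H. rewrite upd_comm; auto.
      * rewrite IHp, (hs _ env). rewrite upd_comm in H; auto.
  - destruct (Nat.eqb_spec n x); simpl.
    + subst; split; intros [d H]; exists d; [rewrite upd_same|rewrite upd_same in H]; apply H.
    + split; intros [d H]; exists d.
      * rewrite IHp in H. rewrite (hs _ env) in H. rewrite upd_comm; auto.
      * rewrite IHp, (hs _ env). rewrite upd_comm in H; auto.
Qed.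
End Subst.

Lemma teval_coinc V D (M : structure V D) t : forall env env',
  (forall n, tfree n t -> env n = env' n) -> teval M env t = teval M env' t.
Proof.
  induction t as [n|f args IH]; intros env env' H; simpl in *.
  - now apply H.
  - f_equal; apply functional_extensionality; intro i; apply IH; intros n Hn; apply H; eauto.
Qed.

Arguments teval_coinc {V D} M t.

Lemma sat_coinc V D (M : structure V D) p : forall env env',
  (forall n, free n p -> env n = env' n) -> (sat M env p <-> sat M env' p).
Proof.
  induction p; intros env env' H; simpl in *; try tauto.
  - rewrite (teval_coinc M t env env'), (teval_coinc M t0 env env'); auto; tauto.
  - replace (fun i => teval M env (t i)) with (fun i => teval M env' (t i)); [tauto|].
    apply functional_extensionality; intro i; symmetry; apply teval_coinc; eauto.
  - rewrite (IHp env env'); auto; tauto.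
  - rewrite (IHp1 env env'), (IHp2 env env'); auto; tauto.
  - rewrite (IHp1 env env'), (IHp2 env env'); auto; tauto.
  - rewrite (IHp1 env env'), (IHp2 env env'); auto; tauto.
  - assert (forall d, sat M (upd env n d) p <-> sat M (upd env' n d) p).
    { intro d; apply IHp; intros m Hm; unfold upd; destruct (Nat.eqb_spec m n); auto. }
    split; intros H1 d; apply H0; auto.
  - assert (forall d, sat M (upd env n d) p <-> sat M (upd env' n d) p).
    { intro d; apply IHp; intros m Hm; unfold upd; destruct (Nat.eqb_spec m n); auto. }
    split; intros [d H1]; exists d; apply H0; auto.
Qed.

Lemma phi_w_sat V D (M : structure V D) d x phi env :
  sat (expand_const M d) env (phi_w x phi) <-> sat M (upd env x d) phi.
Proof.
  unfold phi_w. rewrite sat_subst by reflexivity.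
  change (teval (expand_const M d) env (wterm V)) with d.
  rewrite sat_rename, reduct_incl_const. tauto.
Qed.

Lemma phi_env V D (M : structure V D) x phi env d :
  (forall n, free n phi -> n = x) -> env x = d -> (sat M env phi <-> sat M (fun _ => d) phi).
Proof. intros H He; apply sat_coinc; intros n Hn; apply H in Hn; subst; auto. Qed.

Lemma phi_upd V D (M : structure V D) x phi env d :
  (forall n, free n phi -> n = x) -> (sat M (upd env x d) phi <-> sat M (fun _ => d) phi).
Proof. intro H; apply (@phi_env _ _ M x); auto; apply upd_eq. Qed.

Lemma sat_m_atom V D (M : structure (vaddrel1 V) D) env x :
  sat M env (m_atom V x) <-> rint M None (fun _ => env x).
Proof. reflexivity. Qed.

Lemma sat_m_atom_rel V D (M : structure V D) m env x :
  sat (expand_rel M m) env (m_atom V x) <-> m (env x).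
Proof. reflexivity. Qed.

Theorem theorem5p2 (V : vocab) (P : safety_problem V) (x : nat) (phi : formula V) :
  well_formed_sp P ->
  (forall n, free n phi -> n = x) ->
  (sound_prophecy P x phi <-> safe (Pi_sound P x phi)).
Proof.
  intros _ Hfree; split.
  - intros Hsp D k s' [Hinh [Hi [Ht Hb]]].
    set (s := fun i => reduct (incl_rel V) (s' i)).
    destruct Hinh as [d0].
    assert (Htr : trace_init_bad P k s).
    { split; [constructor; exact d0|]. split; [|split].
      - intro env. destruct (Hi env) as [H _]. apply sat_rename in H. exact H.
      - intros i Hik env. destruct (Ht i Hik env) as [H _]. apply sat_rename in H.
        rewrite reduct_pair in H. exact H.
      - intro env. destruct (Hb env) as [H _]. apply sat_rename in H. exact H. }
    destruct (Hsp D k s Htr) as [d [_ [Hi' [Ht' Hb']]]]. cbv beta in Hi', Ht', Hb'.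
    assert (HP : forall i, i <= k -> sat (s i) (fun _ => d) phi).
    { intros i Hik. destruct (Nat.eq_dec i k).
      - subst. destruct (Hb' (fun _ => d)) as [_ H]. apply phi_w_sat in H.
        rewrite phi_upd in H; auto.
      - destruct (Ht' i ltac:(lia) (fun _ => d)) as [H _]. unfold funprimed in H.
        apply sat_rename in H. rewrite reduct_unprimed in H. apply phi_w_sat in H.
        rewrite phi_upd in H; auto. }
    assert (HPm : forall i env, i <= k -> sat (s' i) (upd env x d) (frename (incl_rel V) phi)).
    { intros i env Hik. apply sat_rename. fold (s i). rewrite phi_upd; auto. }
    assert (HM : forall i, i <= k -> rint (s' i) None (fun _ => d)).
    { induction i as [|i IH]; intros Hik.
      - destruct (Hi (fun _ => d)) as [_ H]. specialize (H d).
        assert (H2 := H (HPm 0 _ Hik)). apply (proj1 (sat_m_atom _ _ _ _ _)) in H2. rewrite upd_eq in H2. exact H2.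
      - destruct (Ht i ltac:(lia) (fun _ => d)) as [_ H]. specialize (H d).
        assert (H2 : sat (combine (s' i) (s' (S i))) (upd (fun _ => d) x d) (fprime (m_atom V x))).
        { apply H. split; [|split].
          * unfold funprimed. apply sat_rename. rewrite reduct_unprimed.
            apply (proj2 (sat_m_atom _ _ _ _ _)). rewrite upd_eq. apply IH; lia.
          * unfold funprimed. apply sat_rename. rewrite reduct_unprimed. apply HPm; lia.
          * unfold fprime. apply sat_rename. rewrite reduct_primed. apply HPm; lia. }
        unfold fprime in H2. apply sat_rename in H2. rewrite reduct_primed in H2.
        apply (proj1 (sat_m_atom _ _ _ _ _)) in H2. rewrite upd_eq in H2. exact H2. }
    destruct (Hb (fun _ => d)) as [_ H]. specialize (H d).
    apply (H (HPm k _ (le_n k))). apply (proj2 (sat_m_atom _ _ _ _ _)). rewrite upd_eq. apply HM; lia.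
  - intros Hsafe D k s [Hinh [Hi [Ht Hb]]].
    destruct (classic (exists d, forall i, i <= k -> sat (s i) (fun _ => d) phi)) as [[d Hd]|Hn].
    + exists d. split; [exact Hinh|]. split; [|split]; cbv beta.
      * intro env. split.
        -- apply sat_rename. rewrite reduct_incl_const. apply Hi.
        -- apply phi_w_sat. rewrite phi_upd by auto. apply Hd; lia.
      * intros i Hik env. split; [|split; [|split]].
        -- unfold funprimed. apply sat_rename. rewrite reduct_unprimed.
           apply phi_w_sat. rewrite phi_upd by auto. apply Hd; lia.
        -- apply sat_rename. rewrite reduct_pair, !reduct_incl_const. apply Ht; auto.
        -- reflexivity.
        -- unfold fprime. apply sat_rename. rewrite reduct_primed.
           apply phi_w_sat. rewrite phi_upd by auto. apply Hd; lia.
      * intro env. split.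
        -- apply sat_rename. rewrite reduct_incl_const. apply Hb.
        -- apply phi_w_sat. rewrite phi_upd by auto. apply Hd; lia.
    + set (mm := fun i a => forall j, j <= i -> sat (s j) (fun _ => a) phi).
      set (s' := fun i => expand_rel (s i) (mm i)).
      exfalso; apply (Hsafe D k s'). split; [exact Hinh|]. split; [|split].
      * intro env. split.
        -- apply sat_rename. unfold s'; cbv beta. rewrite reduct_incl_rel. apply Hi.
        -- intros a Ha. apply sat_rename in Ha. unfold s' in *; cbv beta in *. rewrite reduct_incl_rel in Ha.
           apply (proj2 (sat_m_atom_rel _ _ _ _ _ _)). rewrite upd_eq. intros j Hj.
           assert (j = 0) by lia. subst. rewrite phi_upd in Ha; auto.
      * intros i Hik env. split.
        -- apply sat_rename. unfold s'; cbv beta. rewrite reduct_pair, !reduct_incl_rel. apply Ht; auto.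
        -- intros a [H1 [H2 H3]]. unfold funprimed, fprime in *.
           apply sat_rename in H1, H2, H3. apply sat_rename.
           rewrite reduct_unprimed in H1, H2. rewrite reduct_primed in H3 |- *.
           unfold s' in *; cbv beta in *. apply sat_rename in H2, H3. rewrite reduct_incl_rel in H2, H3.
           apply (proj1 (sat_m_atom_rel _ _ _ _ _ _)) in H1. apply (proj2 (sat_m_atom_rel _ _ _ _ _ _)). rewrite upd_eq in H1 |- *.
           rewrite phi_upd in H2, H3; auto.
           intros j Hj. destruct (Nat.eq_dec j (S i)); [subst; auto|]. apply H1; lia.
      * intro env. split.
        -- apply sat_rename. unfold s'; cbv beta. rewrite reduct_incl_rel. apply Hb.
        -- intros a Ha Hm. apply sat_rename in Ha. unfold s' in *; cbv beta in *. rewrite reduct_incl_rel in Ha.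
           apply (proj1 (sat_m_atom_rel _ _ _ _ _ _)) in Hm. rewrite upd_eq in Hm. apply Hn. exists a. exact Hm.
Qed.
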